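(* If a permutation class has a finite $m$-basis (i.e. it equals the set of permutations avoiding, as submatrices, the matrices of some finite antichain of quasi-permutation matrices), then its $p$-basis is finite.
   Context: A permutation $\sigma$ of $\{1,\dots,n\}$ is identified with its permutation matrix ($M_\sigma(i,j)=1$ iff $i=\sigma(j)$). A matrix $M'$ is a submatrix of $M$ ($M'\preccurlyeq M$) if it is obtained from $M$ by deleting rows and/or columns; the pattern order on permutations is this order restricted to permutation matrices, and a permutation class is a set of permutations closed downward for it. A quasi-permutation matrix is a binary matrix with at most one $1$ in each row and column. An $m$-basis of a permutation class $\mathcal{C}$ is an antichain $\mathcal{M}$ of matrices (for $\preccurlyeq$) such that $\mathcal{C}$ is exactly the set of permutations having no submatrix in $\mathcal{M}$. The $p$-basis of $\mathcal{C}$ is the set of permutations not in $\mathcal{C}$ that are minimal for the pattern order among permutations not in $\mathcal{C}$. *)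

(* Defs.v *)
From Stdlib Require List.
From mathcomp Require Import all_boot all_algebra all_fingroup.
Set Implicit Arguments. Unset Strict Implicit. Unset Printing Implicit Defensive.

Record bmat := BMat { nrows : nat; ncols : nat; entries : 'M[bool]_(nrows, ncols) }.

Definition incr (m m' : nat) (f : 'I_m -> 'I_m') : Prop :=
  forall i j : 'I_m, (i < j)%N -> (f i < f j)%N.

Definition submx (A B : bmat) : Prop :=
  exists (f : 'I_(nrows A) -> 'I_(nrows B)) (g : 'I_(ncols A) -> 'I_(ncols B)),
    incr f /\ incr g /\
    forall i j, entries A i j = entries B (f i) (g j).

Definition quasi_perm (A : bmat) : Prop :=
  (forall i j j', entries A i j -> entries A i j' -> j = j') /\
  (forall i i' j, entries A i j -> entries A i' j -> i = i').

Definition perm_t := {n : nat & 'S_n}.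

Definition pmx (p : perm_t) : bmat :=
  @BMat (tag p) (tag p) (\matrix_(i, j) (i == (tagged p) j)).

Definition pattern (p q : perm_t) : Prop := submx (pmx p) (pmx q).

Definition perm_class (C : perm_t -> Prop) : Prop :=
  forall p q, C q -> pattern p q -> C p.

Definition antichain (M : seq bmat) : Prop :=
  forall A B, List.In A M -> List.In B M -> submx A B -> A = B.

Definition m_basis (C : perm_t -> Prop) (M : seq bmat) : Prop :=
  antichain M /\
  forall p, C p <-> ~ (exists A, List.In A M /\ submx A (pmx p)).

Definition in_p_basis (C : perm_t -> Prop) (p : perm_t) : Prop :=
  ~ C p /\ forall q, ~ C q -> pattern q p -> q = p.

(* Main.v *)
Require Import Defs.
From Stdlib Require List Classical.
From mathcomp Require Import all_boot all_algebra all_fingroup.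

Lemma enum_incr n k (T : {set 'I_n}) : #|T| = k ->
  exists h : 'I_k -> 'I_n, incr h /\ (forall i, h i \in T) /\
    (forall x, x \in T -> exists i, h i = x).
Proof.
move=> <-; exists enum_val; split; [|split].
- move=> i j lij.
  have inc_A : sorted ltn (map val (enum T)).
    rewrite -[enum _](eq_filter (mem_enum _)).
    rewrite -(eq_filter (mem_map val_inj _)) -filter_map.
    by rewrite (sorted_filter ltn_trans) // unlock val_ord_enum iota_ltn_sorted.
  have si : (i < size (enum T))%N by rewrite -cardE ltn_ord.
  have sj : (j < size (enum T))%N by rewrite -cardE ltn_ord.
  rewrite (enum_val_nth (enum_val i)) (enum_val_nth (enum_val i) j).
  rewrite -(nth_map _ 0 val si) -(nth_map _ 0 val sj).
  by apply: (sorted_ltn_nth ltn_trans) => //; rewrite inE size_map.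
- exact: enum_valP.
- move=> x xT; exists (enum_rank_in xT x); exact: enum_rankK_in.
Qed.

Lemma incr_inj m m' (f : 'I_m -> 'I_m') : incr f -> injective f.
Proof.
move=> hf i j e; apply/val_inj; case: (ltngtP i j) => // [/hf|/hf]; rewrite e ltnn //.
Qed.

Lemma incr_refl m m' (f : 'I_m -> 'I_m') i j : incr f -> (f i < f j)%N -> (i < j)%N.
Proof.
move=> hf lt; case: (ltngtP i j) => // [/hf|/val_inj e].
- by move=> h; have := ltn_trans lt h; rewrite ltnn.
- by move: lt; rewrite e ltnn.
Qed.

Lemma shrink n (s : 'S_n) (A : bmat) :
  Defs.submx A (pmx (existT _ n s)) ->
  exists q : perm_t, (tag q <= nrows A + ncols A)%N /\
    pattern q (existT _ n s) /\ Defs.submx A (pmx q).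
Proof.
case: A => r c Am [/= fA [gA [incf [incg Hent]]]].
pose S := gA @: [set: 'I_c] :|: (s^-1)%g @: (fA @: [set: 'I_r]).
have Sle : (#|S| <= r + c)%N.
  rewrite addnC; apply: leq_trans (leq_card_setU _ _) _.
  apply: leq_add; first by apply: leq_trans (leq_imset_card _ _) _; rewrite cardsT card_ord.
  by rewrite card_imset ?(leq_trans (leq_imset_card _ _)) ?cardsT ?card_ord //; exact: perm_inj.
have [cf [incc [cfS cfsurj]]] := @enum_incr _ _ S (erefl #|S|).
have cR : #|s @: S| = #|S| by rewrite card_imset //; exact: perm_inj.
have [rf [incr_ [rfS rfsurj]]] := @enum_incr _ _ (s @: S) cR.
have ex j : exists i, rf i == s (cf j).
  have [i <-] := rfsurj (s (cf j)) (imset_f _ (cfS j)); by exists i.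
pose qf j := xchoose (ex j).
have qfE j : rf (qf j) = s (cf j) by apply/eqP; exact: xchooseP (ex j).
have qinj : injective qf.
  move=> j1 j2 e; apply: (@incr_inj _ _ cf incc); apply: (@perm_inj _ s).
  by rewrite -!qfE e.
exists (existT (fun k => 'S_k) #|S| (perm qinj)); split; [by []|split].
- exists rf, cf; split; [by []|split; [by []|]] => i j /=.
  rewrite !mxE permE -qfE; apply/eqP/eqP => [->//|]; exact: (@incr_inj _ _ rf incr_ i (qf j)).
- have exg j : exists i, cf i == gA j.
    have gS : gA j \in S by rewrite inE; apply/orP; left; exact: imset_f.
    have [i <-] := cfsurj (gA j) gS; by exists i.
  have exf j : exists i, rf i == fA j.
    have fS : (s^-1)%g (fA j) \in S.
      by rewrite inE; apply/orP; right; apply: imset_f; exact: imset_f.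
    have fR : fA j \in s @: S by have := imset_f s fS; rewrite permKV.
    have [i <-] := rfsurj (fA j) fR; by exists i.
  pose g' j := xchoose (exg j); pose f' j := xchoose (exf j).
  have g'E j : cf (g' j) = gA j by apply/eqP; exact: xchooseP (exg j).
  have f'E j : rf (f' j) = fA j by apply/eqP; exact: xchooseP (exf j).
  exists f', g'; split; [|split].
  + by move=> i j l; apply: (@incr_refl _ _ rf (f' i) (f' j) incr_); rewrite !f'E; apply: incf.
  + by move=> i j l; apply: (@incr_refl _ _ cf (g' i) (g' j) incc); rewrite !g'E; apply: incg.
  + move=> i j /=; rewrite Hent /= !mxE permE -f'E -g'E -qfE.
    apply/eqP/eqP => [/(@incr_inj _ _ rf incr_)->//|->//].
Qed.

Lemma in_sumn {M : seq bmat} (f : bmat -> nat) {A} :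
  List.In A M -> (f A <= sumn (map f M))%N.
Proof.
elim: M => //= B M IH [->|/IH h]; first exact: leq_addr.
exact: leq_trans h (leq_addl _ _).
Qed.

Lemma in_seqIn (T : eqType) (x : T) s : x \in s -> List.In x s.
Proof.
elim: s => //= y s IH; rewrite inE => /orP [/eqP ->|/IH]; [left|right] => //.
Qed.

Theorem corollary1 (C : perm_t -> Prop) (M : seq bmat) :
  perm_class C ->
  (forall A, List.In A M -> quasi_perm A) ->
  m_basis C M ->
  exists B : seq perm_t, forall p, in_p_basis C p -> List.In p B.
Proof.
move=> _ _ [_ HM].
pose N := sumn (map (fun A => nrows A + ncols A) M).
exists (List.flat_map (fun m => map (fun s : 'S_m => existT (fun k => 'S_k) m s)
          (enum [set: 'S_m])) (iota 0 N.+1)).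
move=> [n s] [HnC Hmin].
have [A [HA Hsub]] : exists A, List.In A M /\ Defs.submx A (pmx (existT _ n s)).
  apply: Classical_Prop.NNPP => H; apply: HnC; exact/HM.
have [q [qle [qpat qsub]]] := @shrink n s A Hsub.
have qC : ~ C q by move/HM; apply; exists A.
have eq := Hmin q qC qpat.
have nle : (n <= N)%N.
  have -> : n = tag q by rewrite eq.
  exact: (leq_trans qle (in_sumn (fun A => (nrows A + ncols A)%N) HA)).
apply/List.in_flat_map; exists n; split.
  by apply: in_seqIn; rewrite mem_iota add0n ltnS.
apply: List.in_map; apply: in_seqIn; by rewrite mem_enum inE.
Qed.
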